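(* The maps $\alpha_*,\gamma_*,\alpha_{\le\omega},\gamma_{\le\omega}$ are monotone and form Galois connections: for all $U\subseteq\Sigma^*$, $\mathcal U\in\mathcal M_*$, $\alpha_*(U)\subseteq\mathcal U$ iff $U\subseteq\gamma_*(\mathcal U)$; and for all $V\subseteq\Sigma^{\le\omega}$, $\mathcal V\in\mathcal M_{\le\omega}$, $\alpha_{\le\omega}(V)\subseteq\mathcal V$ iff $V\subseteq\gamma_{\le\omega}(\mathcal V)$. Moreover $\alpha_*(\gamma_*(\mathcal U))=\mathcal U$ and $\alpha_{\le\omega}(\gamma_{\le\omega}(\mathcal V))=\mathcal V$ for all $\mathcal U\in\mathcal M_*$, $\mathcal V\in\mathcal M_{\le\omega}$. Furthermore, all four maps preserve unions and least and greatest elements, and $\gamma_*$ and $\gamma_{\le\omega}$ preserve intersections.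
   Context: $\Sigma$ is a finite alphabet, $\Sigma^{\le\omega}=\Sigma^*\cup\Sigma^\omega$; concatenation $w\cdot u$ equals $wu$ if $w$ is finite and $w$ if $w$ is infinite, extended pointwise to languages. For $A\subseteq\Sigma^*$, $A^\omega$ is the set of all words $w_0w_1w_2\cdots$ with $w_i\in A$, and $CD^\omega$ means $C\cdot D^\omega$. Fix an extended Büchi automaton $\mathfrak A=(Q,\Sigma,\delta,q_0,F)$ (finite states, $\delta:Q\times\Sigma\to\mathcal P(Q)$, initial $q_0$, final $F$). For $w\in\Sigma^*$ write $p\overset{w}{\leadsto}q$ if $q$ is reachable from $p$ reading $w$, and $p\overset{w}{\leadsto}_F q$ if there are $q''\in F$, $w=uv$ with $p\overset{u}{\leadsto}q''\overset{v}{\leadsto}q$. For $w,u\in\Sigma^+$, $w\sim u$ iff for all $p,q$: $p\overset{w}{\leadsto}q\Leftrightarrow p\overset{u}{\leadsto}q$ and $p\overset{w}{\leadsto}_Fq\Leftrightarrow p\overset{u}{\leadsto}_Fq$. $\mathcal Q=\Sigma^+/{\sim}\uplus\{[\epsilon]\}$ with $[\epsilon]=\{\epsilon\}$; concatenation of classes is well defined. Let $\mathcal C=\{(C,D)\mid C,D\in\mathcal Q,\ CD=C,\ DD=D\}$. Define $\mathfrak f(V)=\{(C,D)\in\mathcal C\mid CD^\omega\cap V\neq\emptyset\}$ for $V\subseteq\Sigma^{\le\omega}$ and $\mathfrak g(\mathcal V)=\bigcup_{(C,D)\in\mathcal V}CD^\omega$ for $\mathcal V\subseteq\mathcal C$.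 $\mathcal V$ is closed if $\mathfrak f(\mathfrak g(\mathcal V))=\mathcal V$; the closure is $\mathfrak c(\mathcal V)=\bigcup_{n\ge1}(\mathfrak f\circ\mathfrak g)^n(\mathcal V)$. $\mathcal M_{\le\omega}=\{\mathfrak c(\mathfrak f(V))\mid V\subseteq\Sigma^{\le\omega}\}$ and $\mathcal M_*=\mathcal P(\mathcal Q)$, both ordered by inclusion. Abstraction functions: $\alpha_*(U)=\{C\in\mathcal Q\mid C\cap U\neq\emptyset\}$ for $U\subseteq\Sigma^*$, and $\alpha_{\le\omega}(V)=\mathfrak c(\mathfrak f(V))$ for $V\subseteq\Sigma^{\le\omega}$. Concretization functions: $\gamma_*(\mathcal U)=\bigcup_{C\in\mathcal U}C$ and $\gamma_{\le\omega}(\mathcal V)=\mathfrak g(\mathcal V)$. *)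

(* Defs.v *)
From mathcomp Require Import all_boot.
Set Implicit Arguments. Unset Strict Implicit. Unset Printing Implicit Defensive.

Definition incl {T : Type} (A B : T -> Prop) : Prop := forall x, A x -> B x.
Definition seteq {T : Type} (A B : T -> Prop) : Prop := forall x, A x <-> B x.
Definition incl2 {T : Type} (A B : T -> T -> Prop) : Prop :=
  forall x y, A x y -> B x y.
Definition seteq2 {T : Type} (A B : T -> T -> Prop) : Prop :=
  forall x y, A x y <-> B x y.

Section Automaton.
Variable Sigma : finType.

Inductive lword : Type :=
| Fin of seq Sigma
| Inf of (nat -> Sigma).

Definition lang := seq Sigma -> Prop.

Definition lcat_w (w : seq Sigma) (x : lword) : lword :=
  match x with
  | Fin u => Fin (w ++ u)
  | Inf s => Inf (fun i => if i < size w then nth (s 0) w i else s (i - size w))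
  end.

Definition prefix_cat (ws : nat -> seq Sigma) (N : nat) : seq Sigma :=
  flatten [seq ws i | i <- iota 0 N].

(* x is the (possibly finite) infinite concatenation ws 0 . ws 1 . ws 2 ... *)
Definition oconcat (ws : nat -> seq Sigma) (x : lword) : Prop :=
  match x with
  | Fin u => exists N, (forall n, N <= n -> ws n = [::]) /\ u = prefix_cat ws N
  | Inf s => (forall N, exists n, N <= n /\ ws n <> [::]) /\
             (forall N, prefix_cat ws N = mkseq s (size (prefix_cat ws N)))
  end.

Definition omega_pow (A : lang) (x : lword) : Prop :=
  exists ws : nat -> seq Sigma, (forall i, A (ws i)) /\ oconcat ws x.

Definition CDomega (C D : lang) (x : lword) : Prop :=
  exists c y, C c /\ omega_pow D y /\ x = lcat_w c y.


Variable Q : finType.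
Variable delta : Q -> Sigma -> {set Q}.
Variable F : {set Q}.

Fixpoint reach (p : Q) (w : seq Sigma) (q : Q) : Prop :=
  match w with
  | [::] => p = q
  | a :: w' => exists p', p' \in delta p a /\ reach p' w' q
  end.

Definition reachF (p : Q) (w : seq Sigma) (q : Q) : Prop :=
  exists q'' u v, q'' \in F /\ w = u ++ v /\ reach p u q'' /\ reach q'' v q.

(* w ~ u (intended for nonempty words) *)
Definition sim (w u : seq Sigma) : Prop :=
  forall p q, (reach p w q <-> reach p u q) /\ (reachF p w q <-> reachF p u q).

Definition cls_of (w : seq Sigma) : lang :=
  match w with
  | [::] => fun u => u = [::]
  | _ :: _ => fun u => u <> [::] /\ sim w u
  end.

Definition isClass (C : lang) : Prop := exists w, C = cls_of w.

(* product of classes: [c][d] = [cd] (well defined by the paper);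
   for C, D classes this is the class of cd for any representatives. *)
Definition cls_mul (C D : lang) : lang :=
  fun u => exists c d, C = cls_of c /\ D = cls_of d /\ cls_of (c ++ d) u.

Definition isPair (C D : lang) : Prop :=
  isClass C /\ isClass D /\ cls_mul C D = C /\ cls_mul D D = D.

Definition ffam (V : lword -> Prop) : lang -> lang -> Prop :=
  fun C D => isPair C D /\ exists x, CDomega C D x /\ V x.

Definition gfam (VV : lang -> lang -> Prop) : lword -> Prop :=
  fun x => exists C D, VV C D /\ CDomega C D x.

Fixpoint fg_iter (n : nat) (VV : lang -> lang -> Prop) : lang -> lang -> Prop :=
  match n with
  | 0 => VV
  | n'.+1 => ffam (gfam (fg_iter n' VV))
  end.

Definition closure (VV : lang -> lang -> Prop) : lang -> lang -> Prop :=
  fun C D => exists n, 1 <= n /\ fg_iter n VV C D.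

Definition alpha_star (U : lang) : lang -> Prop :=
  fun C => isClass C /\ exists u, C u /\ U u.
Definition gamma_star (UU : lang -> Prop) : lang :=
  fun u => exists C, UU C /\ C u.
Definition alpha_le (V : lword -> Prop) : lang -> lang -> Prop :=
  closure (ffam V).
Definition gamma_le (VV : lang -> lang -> Prop) : lword -> Prop := gfam VV.

Definition inMstar (UU : lang -> Prop) : Prop := forall C, UU C -> isClass C.
Definition inMle (VV : lang -> lang -> Prop) : Prop :=
  exists V : lword -> Prop, seteq2 VV (alpha_le V).

End Automaton.

(* Main.v *)
Require Import Defs.
From mathcomp Require Import all_boot zify.
From Stdlib Require Import Classical ClassicalEpsilon FunctionalExtensionality PropExtensionality.
Set Implicit Arguments. Unset Strict Implicit. Unset Printing Implicit Defensive.

Lemma pext (P R : Prop) : (P <-> R) -> P = R.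
Proof. exact: propositional_extensionality. Qed.

Lemma seteq2E T (A B : T -> T -> Prop) : seteq2 A B -> A = B.
Proof. move=> h; apply: functional_extensionality => x;
  apply: functional_extensionality => y; exact: pext. Qed.

Section Basics.
Variable Sigma : finType.
Variable Q : finType.
Variable delta : Q -> Sigma -> {set Q}.
Variable F : {set Q}.

Notation reach := (@reach Sigma Q delta).
Notation reachF := (@reachF Sigma Q delta F).
Notation sim := (@sim Sigma Q delta F).
Notation cls_of := (@cls_of Sigma Q delta F).
Notation cls_mul := (@cls_mul Sigma Q delta F).

Lemma reach_cat p u v q : reach p (u ++ v) q <-> exists r, reach p u r /\ reach r v q.
Proof.
elim: u p => [|a u IH] p /=.
  by split; [move=> h; exists p | move=> [r [-> h]]].
split.
  move=> [p' [hp hr]]; have [r [h1 h2]] := (IH p').1 hr.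
  by exists r; split=> //; exists p'.
move=> [r [[p' [hp h1]] h2]]; exists p'; split=> //; apply/IH; by exists r.
Qed.

Lemma cat_split (u v a b : seq Sigma) : u ++ v = a ++ b ->
  (exists t, a = u ++ t /\ v = t ++ b) \/ (exists t, u = a ++ t /\ b = t ++ v).
Proof.
elim: u a => [|x u IH] a /=.
  by move=> ->; left; exists a.
case: a => [|y a] /=.
  by move=> <-; right; exists (x :: u).
case=> -> /IH [[t [-> ->]]|[t [-> ->]]].
  by left; exists t.
by right; exists t.
Qed.

Lemma reachF_cat p u v q : reachF p (u ++ v) q <->
  exists r, (reachF p u r /\ reach r v q) \/ (reach p u r /\ reachF r v q).
Proof.
split.
  move=> [q'' [a [b [hF [e [ha hb]]]]]].
  case: (cat_split e) => [[t [ea eb]]|[t [ea eb]]].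
    subst a v. have [r [h1 h2]] := (reach_cat p u t q'').1 ha.
    exists r; right; split=> //; exists q'', t, b; by [].
  subst u b. have [r [h1 h2]] := (reach_cat q'' t v q).1 hb.
  exists r; left; split=> //; exists q'', a, t; split=> //.
move=> [r [[[q'' [a [b [hF [e [ha hb]]]]]] h2]|[h1 [q'' [a [b [hF [e [ha hb]]]]]]]]].
  exists q'', a, (b ++ v); subst u; rewrite catA; split=> //; split=> //; split=> //.
  by apply/reach_cat; exists r.
exists q'', (u ++ a), b; subst v; rewrite catA; split=> //; split=> //; split=> //.
by apply/reach_cat; exists r.
Qed.

Lemma sim_refl w : sim w w.
Proof. by move=> p q. Qed.
Lemma sim_sym w u : sim w u -> sim u w.
Proof. move=> h p q; have [h1 h2] := h p q; split; by symmetry. Qed.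
Lemma sim_trans w u v : sim w u -> sim u v -> sim w v.
Proof. move=> h h' p q; have [h1 h2] := h p q; have [h3 h4] := h' p q.
split; [exact: iff_trans h1 h3|exact: iff_trans h2 h4]. Qed.

Lemma sim_cat c c' d d' : sim c c' -> sim d d' -> sim (c ++ d) (c' ++ d').
Proof.
move=> hc hd p q; split.
  rewrite !reach_cat; split; move=> [r [h1 h2]]; exists r;
  [rewrite -((hc _ _).1) -((hd _ _).1) | rewrite ((hc _ _).1) ((hd _ _).1)]; by [].
rewrite !reachF_cat; split; move=> [r H]; exists r;
 [rewrite -((hc _ _).1) -((hd _ _).1) -((hc _ _).2) -((hd _ _).2)
 | rewrite ((hc _ _).1) ((hd _ _).1) ((hc _ _).2) ((hd _ _).2)]; by [].
Qed.

Lemma cls_ofE w u : cls_of w u <-> (nilp w = nilp u /\ sim w u).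
Proof.
case: w => [|a w] /=; case: u => [|b u] /=.
- by split=> // _; split=> //; apply: sim_refl.
- by split=> [//|[]].
- by split=> [[]|[]].
- by split=> [[_ h]|[_ h]].
Qed.

Lemma cls_of_self w : cls_of w w.
Proof. apply/cls_ofE; split=> //; exact: sim_refl. Qed.

Lemma cls_of_eq w u : cls_of w u -> cls_of w = cls_of u.
Proof.
move=> /cls_ofE [e s]; apply: functional_extensionality => x; apply: pext.
rewrite !cls_ofE; split=> [[e' s']|[e' s']]; split.
- by rewrite -e.
- exact: sim_trans (sim_sym s) s'.
- by rewrite e.
- exact: sim_trans s s'.
Qed.

Lemma cls_of_eqE w u : cls_of w = cls_of u -> cls_of w u.
Proof. by move=> ->; apply: cls_of_self. Qed.

Lemma cls_of_cong c c' d d' : cls_of c = cls_of c' -> cls_of d = cls_of d' ->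
  cls_of (c ++ d) = cls_of (c' ++ d').
Proof.
move=> /cls_of_eqE /cls_ofE [e1 s1] /cls_of_eqE /cls_ofE [e2 s2].
apply: cls_of_eq; apply/cls_ofE; split; last exact: sim_cat.
by rewrite /nilp !size_cat !addn_eq0 -!/(nilp _) e1 e2.
Qed.

Lemma cls_mul_of c d : cls_mul (cls_of c) (cls_of d) = cls_of (c ++ d).
Proof.
apply: functional_extensionality => x; apply: pext; split.
  move=> [c' [d' [e1 [e2 h]]]]. by rewrite (cls_of_cong e1 e2).
by move=> h; exists c, d.
Qed.

End Basics.

Definition infinite (P : nat -> Prop) := forall N, exists n, N <= n /\ P n.

Lemma incr_mono (f : nat -> nat) : (forall i, f i < f i.+1) ->
  forall i j, i < j -> f i < f j.
Proof.
move=> h i j; elim: j => [//|j IH]; rewrite ltnS leq_eqVlt => /orP [/eqP ->//|/IH].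
move=> lt; exact: ltn_trans lt (h j).
Qed.

Lemma pigeon (K : finType) (P : nat -> Prop) (f : nat -> K) : infinite P ->
  exists k, infinite (fun n => P n /\ f n = k).
Proof.
move=> hP; apply: NNPP => hn.
have hk : forall k, exists N, forall n, N <= n -> P n -> f n <> k.
  move=> k; apply: NNPP => H; apply: hn; exists k => N; apply: NNPP => H2.
  apply: H; exists N => n hn' hp hf; apply: H2; exists n; by split.
have aux : forall s : seq K, exists N, forall n, N <= n -> P n -> f n \notin s.
  elim=> [|k s [N IH]]; first by exists 0.
  have [N' hN'] := hk k; exists (maxn N N') => n hn' hp.
  rewrite in_cons negb_or; apply/andP; split.
    apply/eqP; apply: hN' => //; exact: leq_trans (leq_maxr _ _) hn'.
  apply: IH => //; exact: leq_trans (leq_maxl _ _) hn'.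
have [N hN] := aux (enum K).
have [n [hn' hp]] := hP N.
by move: (hN n hn' hp); rewrite mem_enum.
Qed.

Section Ramsey.
Variable K : finType.
Variable c : nat -> nat -> K.

Definition Good (st : nat * (nat -> Prop)) (r : K * nat * (nat -> Prop)) :=
  st.2 r.1.2 /\ c st.1 r.1.2 = r.1.1 /\ infinite r.2 /\
  (forall b, r.2 b -> st.2 b /\ c st.1 b = r.1.1 /\ r.1.2 < b).

Lemma Good_ex st : infinite st.2 -> exists r, Good st r.
Proof.
case: st => a A /= hA.
have [k hk] := pigeon (c a) hA.
have [a' [_ [ha' hc]]] := hk 0.
exists (k, a', fun b => (A b /\ c a b = k) /\ a' < b); rewrite /Good /=.
split=> //; split=> //; split.
  move=> N; have [n [hn [h1 h2]]] := hk (maxn N a'.+1).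
  exists n; split; first exact: leq_trans (leq_maxl _ _) hn.
  split=> //; exact: leq_trans (leq_maxr _ _) hn.
by move=> b [[h1 h2] h3].
Qed.

Definition inh : inhabited (K * nat * (nat -> Prop)) := inhabits (c 0 0, 0, fun _ => True).
Definition stepf st := epsilon inh (Good st).
Fixpoint stt (i : nat) : nat * (nat -> Prop) :=
  match i with 0 => (0, fun b : nat => is_true (0 < b))
  | i'.+1 => ((stepf (stt i')).1.2, (stepf (stt i')).2) end.
Definition kk i := (stepf (stt i)).1.1.

Lemma inv i : infinite (stt i).2 /\ Good (stt i) (stepf (stt i)).
Proof.
have G : forall st, infinite st.2 -> Good st (stepf st).
  move=> st h; apply: epsilon_spec; exact: Good_ex.
elim: i => [|i [h1 h2]].
  have h : infinite (stt 0).2.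
    move=> N; exists N.+1; split=> //.
  by split=> //; apply: G.
have h : infinite (stt i.+1).2 by case: h2 => _ [_ [h _]].
by split=> //; apply: G.
Qed.

Lemma F1 i b : (stt i.+1).2 b -> (stt i).2 b /\ c (stt i).1 b = kk i /\ (stt i.+1).1 < b.
Proof. have [_ [_ [_ [_ h]]]] := inv i; exact: h. Qed.
Lemma F2 i : (stt i).2 (stt i.+1).1 /\ c (stt i).1 (stt i.+1).1 = kk i.
Proof. have [_ [h [h' _]]] := inv i; by split. Qed.
Lemma F3 i b : (stt i).2 b -> (stt i).1 < b.
Proof. case: i => [//|i] /F1; by case=> _ []. Qed.
Lemma F4 i m b : (stt (i + m)).2 b -> (stt i).2 b.
Proof. elim: m b => [|m IH] b; rewrite ?addn0 // addnS => /F1 [h _]; exact: IH. Qed.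

Lemma incr_a i : (stt i).1 < (stt i.+1).1.
Proof. exact: F3 (F2 i).1. Qed.

Lemma col_a i j : i < j -> c (stt i).1 (stt j).1 = kk i.
Proof.
move=> lt; have [m ->] : exists m, j = i.+1 + m by exists (j - i.+1); rewrite subnKC.
case: m => [|m]; first by rewrite addn0; exact: (F2 i).2.
rewrite addnS; have := (F2 (i.+1 + m)).1 => /F4 /F1 [_ [h _]]; exact: h.
Qed.

Lemma ramsey : exists (a : nat -> nat) (k : K),
  (forall i, a i < a i.+1) /\ (forall i j, i < j -> c (a i) (a j) = k).
Proof.
have [k0 hk] := pigeon kk (P := fun _ => True) (fun N => ex_intro _ N (conj (leqnn N) I)).
pose S i := True /\ kk i = k0.
have inhn : inhabited nat by constructor; exact 0.
pose fix m j := match j with 0 => epsilon inhn S | j'.+1 => epsilon inhn (fun i => S i /\ m j' < i) end.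
have hm : forall j, S (m j).
  case=> [|j] /=.
    apply: epsilon_spec; have [n [_ h]] := hk 0; by exists n.
  have : S (epsilon inhn (fun i => S i /\ m j < i)) /\ m j < epsilon inhn (fun i => S i /\ m j < i).
    apply: (epsilon_spec inhn (fun i => S i /\ m j < i)); have [n [h1 h2]] := hk (m j).+1; by exists n.
  by case.
have hinc : forall j, m j < m j.+1.
  move=> j /=; have : S (epsilon inhn (fun i => S i /\ m j < i)) /\ m j < epsilon inhn (fun i => S i /\ m j < i).
    apply: (epsilon_spec inhn (fun i => S i /\ m j < i)); have [n [h1 h2]] := hk (m j).+1; by exists n.
  by case.
exists (fun j => (stt (m j)).1), k0; split.
  move=> i; exact: (incr_mono incr_a (hinc i)).
move=> i j lt; rewrite col_a; first by case: (hm i).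
exact: (incr_mono hinc).
Qed.

End Ramsey.

Section Cover.
Variable Sigma : finType.
Variable Q : finType.
Variable delta : Q -> Sigma -> {set Q}.
Variable F : {set Q}.

Notation reach := (@reach Sigma Q delta).
Notation reachF := (@reachF Sigma Q delta F).
Notation sim := (@sim Sigma Q delta F).
Notation cls_of := (@cls_of Sigma Q delta F).
Notation cls_mul := (@cls_mul Sigma Q delta F).
Notation isPair := (@isPair Sigma Q delta F).
Notation isClass := (@isClass Sigma Q delta F).

Definition asb (P : Prop) : bool := if excluded_middle_informative P then true else false.
Lemma asbP P : asb P = true <-> P.
Proof. by rewrite /asb; case: excluded_middle_informative. Qed.

Definition col (w : seq Sigma) : (bool * {ffun Q * Q -> bool} * {ffun Q * Q -> bool})%type :=
  (nilp w, [ffun pq : Q * Q => asb (reach pq.1 w pq.2)],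
           [ffun pq : Q * Q => asb (reachF pq.1 w pq.2)]).

Lemma col_eq w u : col w = col u -> cls_of w = cls_of u.
Proof.
case=> e1 e2 e3; apply: cls_of_eq; apply/cls_ofE; split=> // p q.
have h2 := congr1 (fun f : {ffun Q * Q -> bool} => f (p, q)) e2; have h3 := congr1 (fun f : {ffun Q * Q -> bool} => f (p, q)) e3.
move: h2 h3; rewrite /= !ffunE /= => h2 h3.
by rewrite -(asbP (reach p w q)) -(asbP (reachF p w q)) h2 h3 !asbP.
Qed.

Lemma cover_fin u : exists C D, isPair C D /\ CDomega C D (Fin u).
Proof.
exists (cls_of u), (cls_of [::]); split.
  split; first by exists u. split; first by exists [::].
  by rewrite !cls_mul_of cats0.
exists u, (Fin [::]); split; first exact: cls_of_self.
split; last by rewrite /= cats0.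
exists (fun _ => [::]); split; first by move=> _; exact: cls_of_self.
by exists 0.
Qed.

Section Inf.
Variable s : nat -> Sigma.
Definition slice i j := map s (iota i (j - i)).

Lemma slice_cat i j k : i <= j -> j <= k -> slice i j ++ slice j k = slice i k.
Proof.
move=> h1 h2; rewrite /slice -map_cat (_ : k - i = (j - i) + (k - j)); last lia.
by rewrite iotaD (_ : i + (j - i) = j) //; lia.
Qed.

Lemma slice_mk i j : slice i j = mkseq (fun k => s (i + k)) (j - i).
Proof. rewrite /slice /mkseq; have := iotaDl i 0 (j - i); rewrite addn0 => ->; by rewrite -map_comp. Qed.

Lemma cover_inf : exists C D, isPair C D /\ CDomega C D (Inf s).
Proof.
have [a [k [ha hk]]] := ramsey (fun i j => col (slice i j)).
have mono : forall i j, i < j -> a i < a j by exact: incr_mono.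
have monoe : forall i j, i <= j -> a i <= a j.
  move=> i j; rewrite leq_eqVlt => /orP [/eqP ->//|/mono]; exact: ltnW.
pose E := cls_of (slice (a 0) (a 1)).
have hE : forall i j, i < j -> cls_of (slice (a i) (a j)) = E.
  move=> i j lt; apply: col_eq; rewrite hk // hk //.
pose c := slice 0 (a 1).
pose ws i := slice (a i.+1) (a i.+2).
exists (cls_of c), (cls_of (slice (a 1) (a 2))); split.
  split; first by exists c. split; first by eexists.
  rewrite !cls_mul_of; split.
    rewrite /c slice_cat //; last exact: ltnW (mono _ _ _).
    rewrite -(@slice_cat 0 (a 0) (a 2)) // ?(monoe 0 2) //.
    rewrite -(@slice_cat 0 (a 0) (a 1)) // ?(monoe 0 1) //.
    apply: cls_of_cong => //; rewrite hE //.
  rewrite (@cls_of_cong _ _ delta F (slice (a 1) (a 2)) (slice (a 1) (a 2)) (slice (a 1) (a 2)) (slice (a 2) (a 3))) //;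
    last by rewrite !hE.
  rewrite slice_cat ?monoe //; by rewrite !hE.
exists c, (Inf (fun i => s (a 1 + i))); split; first exact: cls_of_self.
split.
  exists ws; split.
    move=> i; apply: cls_of_eqE; rewrite /ws !hE //; exact: leqW.
  split.
    move=> N; exists N; split=> //; rewrite /ws /slice.
    have := mono N.+1 N.+2 (ltnSn _); rewrite -subn_gt0; by case: (a N.+2 - a N.+1).
  have hp : forall N, prefix_cat ws N = slice (a 1) (a N.+1).
    elim=> [|N IH]; first by rewrite /slice subnn.
    rewrite /prefix_cat -addn1 iotaD map_cat flatten_cat -/(prefix_cat ws N) IH /= cats0.
    by rewrite add0n addn1 slice_cat ?monoe.
  move=> N; rewrite hp slice_mk /slice size_map size_iota; by [].
congr Inf; apply: functional_extensionality => i.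
rewrite /c /slice subn0 size_map size_iota.
case: ifP => lt.
  by rewrite (nth_map 0) ?size_iota // nth_iota.
by congr s; lia.
Qed.
End Inf.

Lemma cover_all x : exists C D, isPair C D /\ CDomega C D x.
Proof. case: x => [u|s]; [exact: cover_fin|exact: cover_inf]. Qed.

End Cover.

Section Main.
Variable Sigma : finType.
Variable Q : finType.
Variable delta : Q -> Sigma -> {set Q}.
Variable F : {set Q}.

Notation cls_of := (@cls_of Sigma Q delta F).
Notation isPair := (@isPair Sigma Q delta F).
Notation isClass := (@isClass Sigma Q delta F).
Notation ffam := (@ffam Sigma Q delta F).
Notation gfam := (@gfam Sigma).
Notation fg_iter := (@fg_iter Sigma Q delta F).
Notation clo := (@Defs.closure Sigma Q delta F).
Notation aS := (@alpha_star Sigma Q delta F).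
Notation gS := (@gamma_star Sigma).
Notation aL := (@alpha_le Sigma Q delta F).
Notation gL := (@gamma_le Sigma).
Notation MS := (@inMstar Sigma Q delta F).
Notation ML := (@inMle Sigma Q delta F).

Lemma ffam_mono V V' : incl V V' -> incl2 (ffam V) (ffam V').
Proof. move=> h C D [hp [x [hx hV]]]; split=> //; exists x; split=> //; exact: h. Qed.
Lemma gfam_mono W W' : incl2 W W' -> incl (gfam W) (gfam W').
Proof. move=> h x [C [D [hW hx]]]; exists C, D; split=> //; exact: h. Qed.
Lemma fg_mono n W W' : incl2 W W' -> incl2 (fg_iter n W) (fg_iter n W').
Proof. elim: n => [//|n IH] h /=; apply: ffam_mono; apply: gfam_mono; exact: IH. Qed.
Lemma clo_mono W W' : incl2 W W' -> incl2 (clo W) (clo W').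
Proof. move=> h C D [n [hn H]]; exists n; split=> //; exact: fg_mono H. Qed.

Lemma fgf_ext V : incl2 (ffam V) (ffam (gfam (ffam V))).
Proof.
move=> C D [hp [x [hx hV]]]; split=> //; exists x; split=> //.
exists C, D; split=> //; split=> //; by exists x.
Qed.

Lemma closed W : ffam (gfam (clo W)) = clo W.
Proof.
apply: seteq2E => C D; split.
  move=> [hp [x [hx [C' [D' [[n [hn H]] hx']]]]]].
  exists n.+1; split=> //=; split=> //; exists x; split=> //; by exists C', D'.
move=> [[|n] [//= _ [hp [x [hx hg]]]]].
split=> //; exists x; split=> //; exists C, D; split=> //.
exists n.+1; split=> //; split=> //; by exists x.
Qed.

Lemma fg_clo n W : fg_iter n (clo W) = clo W.
Proof. elim: n => [//|n IH] /=; by rewrite IH closed. Qed.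

Lemma clo_idem W : clo (clo W) = clo W.
Proof.
apply: seteq2E => C D; split; first by move=> [n [_ H]]; rewrite fg_clo in H.
move=> H; exists 1; split=> //; by rewrite fg_clo.
Qed.

Lemma ffam_clo V : incl2 (ffam V) (clo (ffam V)).
Proof. move=> C D H; exists 1; split=> //; exact: fgf_ext. Qed.

Lemma ML_eq VV : ML VV -> exists V, VV = aL V.
Proof. move=> [V h]; exists V; exact: seteq2E. Qed.

Lemma aL_closed V : ffam (gfam (aL V)) = aL V.
Proof. exact: closed. Qed.

Lemma class_mem C u : isClass C -> C u -> C = cls_of u.
Proof. move=> [w ->]; exact: cls_of_eq. Qed.

Lemma clo_empty V : (forall x, ~ V x) -> forall C D, ~ clo (ffam V) C D.
Proof.
move=> hV C D [n [_ H]]; elim: n C D H => [|n IH] C D /=.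
  by move=> [_ [x [_ hx]]]; exact: hV hx.
move=> [_ [x [_ [C' [D' [h _]]]]]]; exact: IH h.
Qed.

Lemma s1 U : MS (aS U). Proof. by move=> C []. Qed.
Lemma s3 U U' : incl U U' -> incl (aS U) (aS U').
Proof. move=> h C [hC [u [hu hU]]]; split=> //; exists u; split=> //; exact: h. Qed.
Lemma s4 UU UU' : MS UU -> MS UU' -> incl UU UU' -> incl (gS UU) (gS UU').
Proof. move=> _ _ h u [C [hC hu]]; exists C; split=> //; exact: h. Qed.
Lemma s7 U UU : MS UU -> (incl (aS U) UU <-> incl U (gS UU)).
Proof.
move=> hM; split.
  move=> h u hu; exists (cls_of u); split; last exact: cls_of_self.
  apply: h; split; first by exists u. exists u; split=> //; exact: cls_of_self.
move=> h C [hC [u [hCu hUu]]]; have [C' [hUU hC'u]] := h u hUu.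
by rewrite (class_mem hC hCu) -(class_mem (hM C' hUU) hC'u).
Qed.
Lemma s9 UU : MS UU -> seteq (aS (gS UU)) UU.
Proof.
move=> hM C; split.
  move=> [hC [u [hCu [C' [hUU hC'u]]]]].
  by rewrite (class_mem hC hCu) -(class_mem (hM C' hUU) hC'u).
move=> hUU; have [w ew] := hM C hUU; split; first by exists w.
exists w; rewrite ew; split; first exact: cls_of_self.
exists (cls_of w); rewrite -ew; split=> //; rewrite ew; exact: cls_of_self.
Qed.
Lemma s11 (I : Type) (Us : I -> lang Sigma) :
  seteq (aS (fun u => exists i, Us i u)) (fun C => exists i, aS (Us i) C).
Proof.
move=> C; split.
  move=> [hC [u [hu [i hi]]]]; exists i; split=> //; by exists u.
move=> [i [hC [u [hu hi]]]]; split=> //; exists u; split=> //; by exists i.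
Qed.
Lemma s12 (I : Type) (UUs : I -> lang Sigma -> Prop) : (forall i, MS (UUs i)) ->
  seteq (gS (fun C => exists i, UUs i C)) (fun u => exists i, gS (UUs i) u).
Proof.
move=> _ u; split.
  move=> [C [[i hi] hu]]; exists i, C; by split.
move=> [i [C [hi hu]]]; exists C; split=> //; by exists i.
Qed.
Lemma s15 : MS (aS (fun _ => False)) /\ (forall UU, MS UU -> incl (aS (fun _ => False)) UU).
Proof. split; first exact: s1. by move=> UU _ C [_ [u [_ []]]]. Qed.
Lemma s16 BB : MS BB -> (forall UU, MS UU -> incl BB UU) -> seteq (gS BB) (fun _ => False).
Proof.
move=> _ h u; split=> // [[C [hB _]]].
by apply: (h (fun _ => False)) hB => C' [].
Qed.
Lemma s19 : MS (aS (fun _ => True)) /\ (forall UU, MS UU -> incl UU (aS (fun _ => True))).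
Proof.
split; first exact: s1.
move=> UU hM C hC; have [w ew] := hM C hC; split; first by exists w.
by exists w; rewrite ew; split=> //; exact: cls_of_self.
Qed.
Lemma s20 TT : MS TT -> (forall UU, MS UU -> incl UU TT) -> seteq (gS TT) (fun _ => True).
Proof.
move=> _ h u; split=> // _; exists (cls_of u); split; last exact: cls_of_self.
have hh := h (aS (fun _ => True)) (@s1 (fun _ => True)); apply: hh; split; first by exists u.
by exists u; split=> //; exact: cls_of_self.
Qed.
Lemma s23 (I : Type) (UUs : I -> lang Sigma -> Prop) : inhabited I ->
  (forall i, MS (UUs i)) ->
  seteq (gS (fun C => forall i, UUs i C)) (fun u => forall i, gS (UUs i) u).
Proof.
move=> _ hM u; split.
  move=> [C [h hu]] i; exists C; by split.
move=> h; exists (cls_of u); split; last exact: cls_of_self.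
move=> i; have [C [hC hu]] := h i.
by rewrite -(class_mem (hM i C hC) hu).
Qed.

Lemma l2 V : ML (aL V). Proof. by exists V. Qed.
Lemma l5 V V' : incl V V' -> incl2 (aL V) (aL V').
Proof. move=> h; apply: clo_mono; exact: ffam_mono. Qed.
Lemma l6 VV VV' : ML VV -> ML VV' -> incl2 VV VV' -> incl (gL VV) (gL VV').
Proof. move=> _ _; exact: gfam_mono. Qed.

Lemma cover_in V x : V x -> exists C D, aL V C D /\ CDomega C D x.
Proof.
move=> hx; have [C [D [hp hc]]] := @cover_all _ _ delta F x.
exists C, D; split=> //; apply: ffam_clo; split=> //; by exists x.
Qed.

Lemma in_closed VV C D x : ML VV -> isPair C D -> CDomega C D x -> gL VV x -> VV C D.
Proof.
move=> hM hp hc hg; have [V' eV] := ML_eq hM; rewrite eV -aL_closed.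
split=> //; exists x; split=> //; by rewrite -eV.
Qed.

Lemma l8 V VV : ML VV -> (incl2 (aL V) VV <-> incl V (gL VV)).
Proof.
move=> hM; have [V' eV] := ML_eq hM; split.
  move=> h x hx; have [C [D [hC hc]]] := cover_in hx; exists C, D; split=> //; exact: h.
move=> h; rewrite eV /alpha_le -(clo_idem (ffam V')); apply: clo_mono.
rewrite -(closed (ffam V')); apply: ffam_mono; rewrite eV in h; exact: h.
Qed.
Lemma l10 VV : ML VV -> seteq2 (aL (gL VV)) VV.
Proof.
move=> hM; have [V' ->] := ML_eq hM; move=> C D.
by rewrite /alpha_le /gamma_le closed clo_idem.
Qed.

Lemma ffam_union (I : Type) (Vs : I -> lword Sigma -> Prop) :
  ffam (fun x => exists i, Vs i x) = fun C D => exists i, ffam (Vs i) C D.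
Proof.
apply: seteq2E => C D; split.
  move=> [hp [x [hx [i hi]]]]; exists i; split=> //; by exists x.
move=> [i [hp [x [hx hi]]]]; split=> //; exists x; split=> //; by exists i.
Qed.
Lemma gfam_union (I : Type) (Ws : I -> lang Sigma -> lang Sigma -> Prop) :
  gfam (fun C D => exists i, Ws i C D) = fun x => exists i, gfam (Ws i) x.
Proof.
apply: functional_extensionality => x; apply: pext; split.
  move=> [C [D [[i hi] hx]]]; exists i, C, D; by split.
move=> [i [C [D [hi hx]]]]; exists C, D; split=> //; by exists i.
Qed.
Lemma fg_union n (I : Type) (Ws : I -> lang Sigma -> lang Sigma -> Prop) :
  fg_iter n (fun C D => exists i, Ws i C D) = fun C D => exists i, fg_iter n (Ws i) C D.
Proof. elim: n => [//|n IH] /=; by rewrite IH gfam_union ffam_union. Qed.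

Lemma l13 (I : Type) (Vs : I -> lword Sigma -> Prop) :
  seteq2 (aL (fun x => exists i, Vs i x)) (fun C D => exists i, aL (Vs i) C D).
Proof.
move=> C D; rewrite /alpha_le /Defs.closure ffam_union; split.
  move=> [n [hn]]; rewrite fg_union => [[i h]]; exists i, n; by split.
move=> [i [n [hn h]]]; exists n; split=> //; rewrite fg_union; by exists i.
Qed.
Lemma l14 (I : Type) (VVs : I -> lang Sigma -> lang Sigma -> Prop) :
  (forall i, ML (VVs i)) ->
  seteq (gL (fun C D => exists i, VVs i C D)) (fun x => exists i, gL (VVs i) x).
Proof. move=> _ x; by rewrite /gamma_le gfam_union. Qed.
Lemma l17 : ML (aL (fun _ => False)) /\ (forall VV, ML VV -> incl2 (aL (fun _ => False)) VV).
Proof. split; first exact: l2. move=> VV _ C D H; exfalso; exact: (@clo_empty (fun _ => False) (fun _ h => h) C D H). Qed.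
Lemma l18 BB : ML BB -> (forall VV, ML VV -> incl2 BB VV) -> seteq (gL BB) (fun _ => False).
Proof.
move=> _ h x; split=> // [[C [D [hB _]]]].
exact: (@clo_empty (fun _ => False) (fun _ h => h) C D (h _ (@l2 (fun _ => False)) C D hB)).
Qed.
Lemma l21 : ML (aL (fun _ => True)) /\ (forall VV, ML VV -> incl2 VV (aL (fun _ => True))).
Proof. split; first exact: l2. move=> VV hM; have [V' ->] := ML_eq hM; exact: l5. Qed.
Lemma l22 TT : ML TT -> (forall VV, ML VV -> incl2 VV TT) -> seteq (gL TT) (fun _ => True).
Proof.
move=> _ h x; split=> // _.
have [C [D [hC hc]]] := @cover_in (fun _ => True) x I.
exists C, D; split=> //; exact: (h _ (@l2 (fun _ => True)) C D hC).
Qed.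
Lemma l24 (I : Type) (VVs : I -> lang Sigma -> lang Sigma -> Prop) : inhabited I ->
  (forall i, ML (VVs i)) ->
  seteq (gL (fun C D => forall i, VVs i C D)) (fun x => forall i, gL (VVs i) x).
Proof.
move=> _ hM x; split.
  move=> [C [D [h hx]]] i; exists C, D; by split.
move=> h; have [C [D [hp hc]]] := @cover_all _ _ delta F x.
exists C, D; split=> // i; exact: in_closed (hM i) hp hc (h i).
Qed.

End Main.
Theorem lemma8 (Sigma : finType) (Q : finType) (delta : Q -> Sigma -> {set Q})
    (q0 : Q) (F : {set Q}) :
  let aS := @alpha_star Sigma Q delta F in
  let gS := @gamma_star Sigma in
  let aL := @alpha_le Sigma Q delta F in
  let gL := @gamma_le Sigma in
  let MS := @inMstar Sigma Q delta F in
  let ML := @inMle Sigma Q delta F in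
  (* the maps land in the respective lattices *)
  (forall U, MS (aS U)) /\ (forall V, ML (aL V)) /\
  (* monotonicity *)
  (forall U U', incl U U' -> incl (aS U) (aS U')) /\
  (forall UU UU', MS UU -> MS UU' -> incl UU UU' -> incl (gS UU) (gS UU')) /\
  (forall V V', incl V V' -> incl2 (aL V) (aL V')) /\
  (forall VV VV', ML VV -> ML VV' -> incl2 VV VV' -> incl (gL VV) (gL VV')) /\
  (* Galois connections *)
  (forall U UU, MS UU -> (incl (aS U) UU <-> incl U (gS UU))) /\
  (forall V VV, ML VV -> (incl2 (aL V) VV <-> incl V (gL VV))) /\
  (* alpha o gamma = id *)
  (forall UU, MS UU -> seteq (aS (gS UU)) UU) /\
  (forall VV, ML VV -> seteq2 (aL (gL VV)) VV) /\
  (* preservation of (arbitrary) unions *)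
  (forall (I : Type) (Us : I -> lang Sigma),
      seteq (aS (fun u => exists i, Us i u)) (fun C => exists i, aS (Us i) C)) /\
  (forall (I : Type) (UUs : I -> lang Sigma -> Prop), (forall i, MS (UUs i)) ->
      seteq (gS (fun C => exists i, UUs i C)) (fun u => exists i, gS (UUs i) u)) /\
  (forall (I : Type) (Vs : I -> lword Sigma -> Prop),
      seteq2 (aL (fun x => exists i, Vs i x)) (fun C D => exists i, aL (Vs i) C D)) /\
  (forall (I : Type) (VVs : I -> lang Sigma -> lang Sigma -> Prop),
      (forall i, ML (VVs i)) ->
      seteq (gL (fun C D => exists i, VVs i C D)) (fun x => exists i, gL (VVs i) x)) /\
  (* preservation of least elements *)
  (MS (aS (fun _ => False)) /\ (forall UU, MS UU -> incl (aS (fun _ => False)) UU)) /\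
  (forall BB, MS BB -> (forall UU, MS UU -> incl BB UU) -> seteq (gS BB) (fun _ => False)) /\
  (ML (aL (fun _ => False)) /\ (forall VV, ML VV -> incl2 (aL (fun _ => False)) VV)) /\
  (forall BB, ML BB -> (forall VV, ML VV -> incl2 BB VV) -> seteq (gL BB) (fun _ => False)) /\
  (* preservation of greatest elements *)
  (MS (aS (fun _ => True)) /\ (forall UU, MS UU -> incl UU (aS (fun _ => True)))) /\
  (forall TT, MS TT -> (forall UU, MS UU -> incl UU TT) -> seteq (gS TT) (fun _ => True)) /\
  (ML (aL (fun _ => True)) /\ (forall VV, ML VV -> incl2 VV (aL (fun _ => True)))) /\
  (forall TT, ML TT -> (forall VV, ML VV -> incl2 VV TT) -> seteq (gL TT) (fun _ => True)) /\
  (* gamma maps preserve (nonempty, arbitrary) intersections *)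
  (forall (I : Type) (UUs : I -> lang Sigma -> Prop), inhabited I ->
      (forall i, MS (UUs i)) ->
      seteq (gS (fun C => forall i, UUs i C)) (fun u => forall i, gS (UUs i) u)) /\
  (forall (I : Type) (VVs : I -> lang Sigma -> lang Sigma -> Prop), inhabited I ->
      (forall i, ML (VVs i)) ->
      seteq (gL (fun C D => forall i, VVs i C D)) (fun x => forall i, gL (VVs i) x)).
Proof.
move=> aS gS aL gL MS ML; rewrite {}/aS {}/gS {}/aL {}/gL {}/MS {}/ML.
split; first exact: s1.
split; first exact: l2.
split; first exact: s3.
split; first exact: s4.
split; first exact: l5.
split; first exact: l6.
split; first exact: s7.
split; first exact: l8.
split; first exact: s9.
split; first exact: l10.
split; first exact: s11.
split; first exact: s12.
split; first exact: l13.
split; first exact: l14.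
split; first exact: s15.
split; first exact: s16.
split; first exact: l17.
split; first exact: l18.
split; first exact: s19.
split; first exact: s20.
split; first exact: l21.
split; first exact: l22.
split; first exact: s23.
exact: l24.
Qed.
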